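(* For any nonempty rooted trees $a$ and $b$, $\omega(a\bowtie b)=0$.
   Context: Let $k$ be a field of characteristic $0$. $\mathcal H_{CK}$ is the Connes–Kreimer Hopf algebra of rooted forests (free commutative algebra on nonempty non-planar rooted trees, unit the empty forest, counit $\varepsilon$, coproduct by admissible cuts $\Delta_{CK}(u)=\sum v\otimes w$ over decompositions of the vertex set of $u$ into $V\sqcup W$ with no vertex of $V$ strictly below a vertex of $W$, $v,w$ the induced forests), with convolution $*$. $\delta$ is the character of $\mathcal H_{CK}$ with $\delta(\bullet)=1$ ($\bullet$ the one-vertex tree) and $\delta(t)=0$ for trees with at least two vertices, and $\omega=\log^*\delta=\sum_{n\ge1}\frac{(-1)^{n+1}}{n}(\delta-\varepsilon)^{*n}$. For trees $a=B_+(a_1\cdots a_n)$, $b=B_+(b_1\cdots b_p)$ (where $B_+$ grafts a forest onto a new root): $a\circ b=B_+(a_1\cdots a_nb)$, $a\times b=B_+(a_1\cdots a_nb_1\cdots b_p)$, and $a\bowtie b=a\circ b+b\circ a+a\times b$. *)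

(* Defs.v *)
(* Connes-Kreimer Hopf algebra of rooted forests, evaluated
   combinatorially on (planar representatives of) forests. *)
From HB Require Import structures.
From mathcomp Require Import all_boot all_order all_algebra.
Set Implicit Arguments. Unset Strict Implicit. Unset Printing Implicit Defensive.
Import GRing.Theory.
Local Open Scope ring_scope.

(* Rooted trees: a root with a (finite) forest of subtrees grafted on it,
   i.e. t = B_+(t_1 ... t_n).  Every tree is nonempty (has a root). *)
Inductive tree : Type := Node of seq tree.
Definition forest := seq tree.

Definition Bplus (f : forest) : tree := Node f.

Fixpoint tsize (t : tree) : nat := let: Node cs := t in (sumn (map tsize cs)).+1.
Definition fsize (u : forest) : nat := sumn (map tsize u).

(* Vertices of a forest are numbered 0 .. fsize u - 1 in preorder.
   ancsT t off A lists, for each vertex of t (in preorder, t's root having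
   number off), the list of the numbers of its strict ancestors (A being the
   strict ancestors of the root of t). *)
Fixpoint ancsT (t : tree) (off : nat) (A : seq nat) {struct t} : seq (seq nat) :=
  let: Node cs := t in
  let fix go (cs : seq tree) (o : nat) : seq (seq nat) :=
    if cs is c :: cs' then
      let l := ancsT c o (off :: A) in l ++ go cs' (o + size l)
    else [::] in
  A :: go cs off.+1.

Fixpoint ancsF_from (u : forest) (o : nat) : seq (seq nat) :=
  if u is t :: u' then
    let l := ancsT t o [::] in l ++ ancsF_from u' (o + size l)
  else [::].

Definition ancsF (u : forest) : seq (seq nat) := ancsF_from u 0.

(* x is strictly below y (x is a strict ancestor of y; roots at the bottom) *)
Definition strictly_below (u : forest) (x y : nat) : bool :=
  x \in nth [::] (ancsF u) y.

(* Induced subforest on the vertices selected by a bit mask (in preorder):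
   kept vertices keep their kept descendants, with the induced order. *)
Fixpoint restrT (t : tree) (m : bitseq) {struct t} : forest * bitseq :=
  let: Node cs := t in
  let fix go (cs : seq tree) (m : bitseq) : forest * bitseq :=
    if cs is c :: cs' then
      let: (f1, m1) := restrT c m in
      let: (f2, m2) := go cs' m1 in (f1 ++ f2, m2)
    else ([::], m) in
  let: (F', m') := go cs (behead m) in
  (if head false m then [:: Node F'] else F', m').

Fixpoint restrF (u : forest) (m : bitseq) : forest * bitseq :=
  if u is t :: u' then
    let: (f1, m1) := restrT t m in
    let: (f2, m2) := restrF u' m1 in (f1 ++ f2, m2)
  else ([::], m).

Definition induced (u : forest) (S : {set 'I_(fsize u)}) : forest :=
  (restrF u [seq i \in S | i <- enum 'I_(fsize u)]).1.

(* Admissible decomposition V ⊔ W of the vertex set (W given, V = ~: W):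
   no vertex of V strictly below a vertex of W. *)
Definition admissible (u : forest) (W : {set 'I_(fsize u)}) : bool :=
  [forall x : 'I_(fsize u), forall y : 'I_(fsize u),
     ~~ [&& x \notin W, y \in W & strictly_below u x y]].

Section Conv.
Variable F : fieldType.

(* Convolution: (f * g)(u) = sum over Delta_CK(u) = sum v (x) w of f(v) g(w),
   v = induced forest on V, w = induced forest on W. *)
Definition conv (f g : forest -> F) (u : forest) : F :=
  \sum_(W : {set 'I_(fsize u)} | admissible W)
     f (induced (~: W)) * g (induced W).

Definition epsilon (u : forest) : F := if u is [::] then 1 else 0.

Definition deltaT (t : tree) : F := if t is Node [::] then 1 else 0.
Definition delta (u : forest) : F := \prod_(t <- u) deltaT t.

Fixpoint convpow (f : forest -> F) (n : nat) : forest -> F :=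
  if n is n'.+1 then conv f (convpow f n') else epsilon.

(* omega = log^* delta = sum_{n>=1} (-1)^{n+1}/n (delta - epsilon)^{*n};
   on a forest u the terms with n > fsize u vanish, so the sum is finite. *)
Definition omega (u : forest) : F :=
  \sum_(1 <= n < (fsize u).+1)
     ((-1) ^+ n.+1 / n%:R) * convpow (fun v => delta v - epsilon v) n u.

(* linear extension of omega to formal linear combinations (here sums)
   of forests *)
Definition omega_lin (x : seq forest) : F := \sum_(u <- x) omega u.
End Conv.

Definition circ (a b : tree) : tree :=
  let: Node as_ := a in Node (rcons as_ b).
Definition times (a b : tree) : tree :=
  let: Node as_ := a in let: Node bs := b in Node (as_ ++ bs).

Definition bowtie (a b : tree) : seq forest :=
  [:: [:: circ a b]; [:: circ b a]; [:: times a b]].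

(* Main.v *)
Require Import Defs.
From mathcomp Require Import all_boot all_order all_algebra.
Import Defs.
Set Implicit Arguments. Unset Strict Implicit. Unset Printing Implicit Defensive.

Section File1.

Section TFInd.
Variables (P : tree -> Prop) (Q : forest -> Prop).
Hypotheses (H0 : Q [::]) (Hc : forall t u, P t -> Q u -> Q (t :: u))
  (Hn : forall cs, Q cs -> P (Node cs)).
Fixpoint tf_ind (t : tree) : P t :=
  match t with
  | Node cs => Hn ((fix go (u : forest) : Q u :=
      match u with [::] => H0 | c :: u' => Hc (tf_ind c) (go u') end) cs)
  end.
Lemma ft_ind u : Q u.
Proof. elim: u => // t u IH; exact: Hc (tf_ind t) IH. Qed.
End TFInd.

Lemma restr_go cs m :
  (fix go (cs : seq tree) (m : bitseq) : forest * bitseq :=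
    if cs is c :: cs' then
      let: (f1, m1) := restrT c m in
      let: (f2, m2) := go cs' m1 in (f1 ++ f2, m2)
    else ([::], m)) cs m = restrF cs m.
Proof. by elim: cs m => //= c cs IH m; case: (restrT c m) => f1 m1; rewrite IH. Qed.

Lemma restrT_Node cs m : restrT (Node cs) m =
  let: (F', m') := restrF cs (behead m) in
  (if head false m then [:: Node F'] else F', m').
Proof. by rewrite /= restr_go. Qed.

Fixpoint ancsFA (u : forest) (o : nat) (B : seq nat) : seq (seq nat) :=
  if u is t :: u' then ancsT t o B ++ ancsFA u' (o + size (ancsT t o B)) B
  else [::].

Lemma ancs_go off A cs o :
  (fix go (cs : seq tree) (o : nat) : seq (seq nat) :=
    if cs is c :: cs' then
      let l := ancsT c o (off :: A) in l ++ go cs' (o + size l)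
    else [::]) cs o = ancsFA cs o (off :: A).
Proof. by elim: cs o => //= c cs IH o; rewrite IH. Qed.

Lemma ancsT_Node cs o A : ancsT (Node cs) o A = A :: ancsFA cs o.+1 (o :: A).
Proof. by rewrite /= ancs_go. Qed.

Lemma ancsF_fromE u o : ancsF_from u o = ancsFA u o [::].
Proof. by elim: u o => //= t u IH o; rewrite IH. Qed.

End File1.

Section File2.

Definition shf o (A : seq nat) (l : seq nat) := map (addn o) l ++ A.

Lemma ancs_size_shift :
  (forall t, forall o A, size (ancsT t o A) = tsize t /\
        ancsT t o A = map (shf o A) (ancsT t 0 [::])) /\
  (forall u, forall o B, size (ancsFA u o B) = fsize u /\
        ancsFA u o B = map (shf o B) (ancsFA u 0 [::])).
Proof.
pose P t := forall o A, size (ancsT t o A) = tsize t /\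
        ancsT t o A = map (shf o A) (ancsT t 0 [::]).
pose Q u := forall o B, size (ancsFA u o B) = fsize u /\
        ancsFA u o B = map (shf o B) (ancsFA u 0 [::]).
have H0 : Q [::] by [].
have Hc : forall t u, P t -> Q u -> Q (t :: u).
  move=> t u Pt Qu o B /=; have [s1 e1] := Pt o B; have [s2 e2] := Qu (o + size (ancsT t o B)) B.
  rewrite s1 in s2 e2; rewrite size_cat s1 s2; split=> //.
  rewrite e2 e1 map_cat; congr (_ ++ _).
  rewrite (proj1 (Pt 0 [::])); have [s3 e3] := Qu (0 + tsize t) [::].
  rewrite e3 -map_comp; apply: eq_map => l /=.
  by rewrite /shf cats0 -map_comp add0n; congr (_ ++ _); apply: eq_map => x /=; rewrite addnA.
have Hn : forall cs, Q cs -> P (Node cs).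
  move=> cs Qcs o A; rewrite !ancsT_Node /=.
  have [s1 e1] := Qcs o.+1 (o :: A); rewrite s1; split=> //.
  rewrite e1 (proj2 (Qcs 1 [:: 0])) -map_comp; congr (_ :: _).
  apply: eq_map => l /=; rewrite /shf map_cat -catA -map_comp /= addn0; congr (_ ++ _).
  by apply: eq_map => x /=; rewrite addnA addn1.
split; [exact: tf_ind H0 Hc Hn | exact: ft_ind H0 Hc Hn].
Qed.

Lemma size_ancsF u : size (ancsF u) = fsize u.
Proof. by rewrite /ancsF ancsF_fromE (proj1 ((proj2 ancs_size_shift) u 0 [::])). Qed.

Lemma ancsF_cons t u : ancsF (t :: u) = ancsF [:: t] ++ map (map (addn (tsize t))) (ancsF u).
Proof.
rewrite /ancsF !ancsF_fromE /= cats0 add0n (proj1 ((proj1 ancs_size_shift) t 0 [::])).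
congr (_ ++ _); rewrite (proj2 ((proj2 ancs_size_shift) u _ [::])).
by apply: eq_map => l; rewrite /shf cats0.
Qed.

Lemma ancsF_Node cs : ancsF [:: Node cs] = [::] :: map (fun l => map S l ++ [:: 0]) (ancsF cs).
Proof.
rewrite /ancsF !ancsF_fromE; change (ancsT (Node cs) 0 [::] ++ [::] = [::] :: map (fun l => map S l ++ [:: 0]) (ancsFA cs 0 [::])).
rewrite cats0 ancsT_Node (proj2 ((proj2 ancs_size_shift) cs 1 [:: 0])).
by congr (_ :: _); apply: eq_map => l; rewrite /shf; congr (_ ++ _); apply: eq_map => x; rewrite add1n.
Qed.

Lemma ancsF_bound : forall u, all (fun l => all (fun x => x < fsize u) l) (ancsF u).
Proof.
pose P t := all (fun l => all (fun x => x < tsize t) l) (ancsF [:: t]).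
pose Q u := all (fun l => all (fun x => x < fsize u) l) (ancsF u).
have H0 : Q [::] by [].
have Hc : forall t u, P t -> Q u -> Q (t :: u).
  move=> t u Pt Qu; rewrite /Q ancsF_cons all_cat; apply/andP; split.
    apply: sub_all Pt => l; apply: sub_all => x /= h; exact: leq_trans h (leq_addr _ _).
  rewrite all_map; apply: sub_all Qu => l /=; rewrite all_map; apply: sub_all => x /= h.
  by rewrite ltn_add2l.
have Hn : forall cs, Q cs -> P (Node cs).
  move=> cs Qcs; rewrite /P ancsF_Node /= all_map; apply: sub_all Qcs => l /=.
  by rewrite all_cat all_map /= andbT.
exact: ft_ind H0 Hc Hn.
Qed.

End File2.

Section File3.

Lemma fsize_cat u v : fsize (u ++ v) = fsize u + fsize v.
Proof. by rewrite /fsize map_cat sumn_cat. Qed.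

Lemma fsize_cons t u : fsize (t :: u) = tsize t + fsize u.
Proof. by []. Qed.

Lemma fsize0 v : fsize v = 0 -> v = [::].
Proof. by case: v => // -[cs] v. Qed.

Lemma restrF1 t m : (restrF [:: t] m).1 = (restrT t m).1.
Proof. by rewrite /=; case: (restrT t m) => f m' /=; rewrite cats0. Qed.

Lemma restr_props :
  (forall t, (forall m r, size m = tsize t -> restrT t (m ++ r) = ((restrT t m).1, r)) /\
     (forall m, size m = tsize t -> fsize (restrT t m).1 = count id m) /\
     (restrT t (nseq (tsize t) true)).1 = [:: t] /\
     (restrT t (nseq (tsize t) false)).1 = [::]) /\
  (forall u, (forall m r, size m = fsize u -> restrF u (m ++ r) = ((restrF u m).1, r)) /\
     (forall m, size m = fsize u -> fsize (restrF u m).1 = count id m) /\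
     (restrF u (nseq (fsize u) true)).1 = u /\
     (restrF u (nseq (fsize u) false)).1 = [::]).
Proof.
pose P t := (forall m r, size m = tsize t -> restrT t (m ++ r) = ((restrT t m).1, r)) /\
     (forall m, size m = tsize t -> fsize (restrT t m).1 = count id m) /\
     (restrT t (nseq (tsize t) true)).1 = [:: t] /\
     (restrT t (nseq (tsize t) false)).1 = [::].
pose Q u := (forall m r, size m = fsize u -> restrF u (m ++ r) = ((restrF u m).1, r)) /\
     (forall m, size m = fsize u -> fsize (restrF u m).1 = count id m) /\
     (restrF u (nseq (fsize u) true)).1 = u /\
     (restrF u (nseq (fsize u) false)).1 = [::].
have H0 : Q [::].
  split; first by case=> //.
  by split=> //; case.
have Hc : forall t u, P t -> Q u -> Q (t :: u).
  move=> t u [Pr [Ps [Pt Pf]]] [Qr [Qs [Qt Qf]]].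
  have split_m : forall m : bitseq, size m = fsize (t :: u) ->
     m = take (tsize t) m ++ drop (tsize t) m /\ size (take (tsize t) m) = tsize t /\
     size (drop (tsize t) m) = fsize u.
    move=> m sm; rewrite cat_take_drop size_take size_drop sm /=.
    have fc : fsize (t :: u) = tsize t + fsize u by [].
    rewrite fc addKn; split=> //; split=> //.
    case: ifP => // /negbT; rewrite -leqNgt => h; apply/eqP; by rewrite eqn_leq h leq_addr.
  have key : forall m1 m2 r : bitseq, size m1 = tsize t -> size m2 = fsize u ->
      restrF (t :: u) (m1 ++ m2 ++ r) = ((restrT t m1).1 ++ (restrF u m2).1, r).
    by move=> m1 m2 r s1 s2 /=; rewrite Pr // Qr.
  split.
    move=> m r sm; have [em [s1 s2]] := split_m m sm.
    move: em s1 s2; set m1 := take _ m; set m2 := drop _ m => -> s1 s2.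
    rewrite -catA key // [in RHS](_ : m1 ++ m2 = m1 ++ m2 ++ [::]); last by rewrite cats0.
    by rewrite key.
  split.
    move=> m sm; have [em [s1 s2]] := split_m m sm.
    move: em s1 s2; set m1 := take _ m; set m2 := drop _ m => -> s1 s2.
    rewrite (_ : m1 ++ m2 = m1 ++ m2 ++ [::]); last by rewrite cats0.
    by rewrite key // fsize_cat Ps // Qs // cats0 count_cat.
  have ent : forall b : bool, nseq (fsize (t :: u)) b = nseq (tsize t) b ++ nseq (fsize u) b ++ [::].
    by move=> b; rewrite cats0 -nseqD.
  by rewrite !ent !key ?size_nseq // Pt Qt Pf Qf.
have Hn : forall cs, Q cs -> P (Node cs).
  move=> cs [Qr [Qs [Qt Qf]]].
  split.
    move=> [|b m] r // sm0; have {sm0} sm : size m = fsize cs by move: sm0 => /= [].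
    rewrite !restrT_Node /= Qr //.
    by case: (restrF cs m).
  split.
    move=> [|b m] // sm0; have {sm0} sm : size m = fsize cs by move: sm0 => /= [].
    rewrite !restrT_Node /=.
    case e: (restrF cs m) => [F' m'] /=; have := Qs m sm; rewrite e /= => <-.
    by case: b => //=; rewrite /fsize /= addn0 add1n.
  split; rewrite restrT_Node /=.
    by case e: (restrF cs _) => [F' m'] /=; move: Qt; rewrite e /= => ->.
  by case e: (restrF cs _) => [F' m'] /=; move: Qf; rewrite e /= => ->.
split; [exact: tf_ind H0 Hc Hn | exact: ft_ind H0 Hc Hn].
Qed.

End File3.

Section File4.
Import GRing.Theory.
Local Open Scope ring_scope.

Fixpoint allm (n : nat) : seq bitseq :=
  if n is n'.+1 then map (cons true) (allm n') ++ map (cons false) (allm n')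
  else [:: [::]].

Lemma cons_inj (b : bool) : injective (cons b).
Proof. by move=> x y []. Qed.

Lemma mem_map_cons (b c : bool) m s : (b :: m \in map (cons c) s) = (b == c) && (m \in s).
Proof.
apply/mapP/andP; first by move=> [y ys [-> ->]].
by move=> [/eqP -> ms]; exists m.
Qed.

Lemma mem_allm n m : (m \in allm n) = (size m == n).
Proof.
elim: n m => [|n IH] m; first by case: m.
rewrite /= mem_cat; case: m => [|b m] /=.
  by apply/negbTE; rewrite negb_or; apply/andP; split; apply/mapP => -[].
by rewrite !mem_map_cons eqSS -IH; case: b; rewrite /= ?orbF.
Qed.

Lemma uniq_allm n : uniq (allm n).
Proof.
elim: n => //= n IH; rewrite cat_uniq !map_inj_uniq // ?IH /=; last 2 first.
- by move=> x y [].
- by move=> x y [].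
rewrite andbT; apply/hasPn => x /mapP [y _ ->]; by rewrite mem_map_cons.
Qed.

Definition msk n (W : {set 'I_n}) : bitseq := [seq i \in W | i <- enum 'I_n].

Lemma size_msk n (W : {set 'I_n}) : size (msk W) = n.
Proof. by rewrite size_map size_enum_ord. Qed.

Lemma nth_msk n (W : {set 'I_n}) (i : 'I_n) : nth false (msk W) i = (i \in W).
Proof. by rewrite (nth_map i) ?size_enum_ord // nth_ord_enum. Qed.

Lemma msk_inj n : injective (@msk n).
Proof.
move=> W1 W2 e; apply/setP => i.
by rewrite -!nth_msk e.
Qed.

Lemma msk_setC n (W : {set 'I_n}) : msk (~: W) = map negb (msk W).
Proof. by rewrite /msk -map_comp; apply: eq_map => i /=; rewrite inE. Qed.

Lemma sum_sets (R : nmodType) n (H : bitseq -> R) :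
  \sum_(W : {set 'I_n}) H (msk W) = \sum_(m <- allm n) H m.
Proof.
rewrite -(big_map (@msk n) xpredT H); apply: perm_big.
apply: uniq_perm; first by rewrite map_inj_uniq ?index_enum_uniq //; exact: msk_inj.
  exact: uniq_allm.
move=> m; rewrite mem_allm; apply/mapP/idP.
  by move=> [W _ ->]; rewrite size_msk.
move=> /eqP sm; exists [set i : 'I_n | nth false m i]; first by rewrite mem_index_enum.
apply: (@eq_from_nth _ false); rewrite ?size_msk //.
move=> i; rewrite sm => lt; have -> : i = Ordinal lt by [].
by rewrite nth_msk inE.
Qed.

Definition admN (anc : seq (seq nat)) (m : bitseq) : bool :=
  all (fun y => nth false m y ==> all (fun x => (x < size m)%N ==> nth false m x) (nth [::] anc y))
      (iota 0 (size m)).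

Lemma admissibleE u (W : {set 'I_(fsize u)}) : admissible W = admN (ancsF u) (msk W).
Proof.
apply/forallP/allP.
  move=> H y; rewrite mem_iota add0n size_msk => ylt; apply/implyP.
  have -> : y = Ordinal ylt by [].
  rewrite nth_msk => yW; apply/allP => x xin; apply/implyP => xlt.
  have -> : x = Ordinal xlt by [].
  rewrite nth_msk; have /forallP/(_ (Ordinal ylt)) := H (Ordinal xlt).
  by rewrite yW /strictly_below xin andbT andbT => /negPn.
move=> H x; apply/forallP => y; apply/negP => /and3P [xW yW sb].
have := H y; rewrite mem_iota add0n size_msk ltn_ord nth_msk yW => /(_ isT) /allP /(_ x sb).
by rewrite ltn_ord nth_msk (negbTE xW).
Qed.

Definition CS (R : nmodType) (u : forest) (G : forest -> forest -> R) : R :=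
  \sum_(m <- allm (fsize u) | admN (ancsF u) m) G (restrF u (map negb m)).1 (restrF u m).1.

Lemma adm_sum (R : nmodType) u (G : forest -> forest -> R) :
  \sum_(W : {set 'I_(fsize u)} | admissible W) G (induced (~: W)) (induced W) = CS u G.
Proof.
rewrite /CS big_mkcond [RHS]big_mkcond /= -sum_sets.
by apply: eq_bigr => W _; rewrite admissibleE /induced -msk_setC.
Qed.

Lemma conv_CS (F : fieldType) (f h : forest -> F) u : conv f h u = CS u (fun v w => f v * h w).
Proof. exact: adm_sum. Qed.

End File4.

Section File5.

Lemma admN_cons t u m1 m2 : size m1 = tsize t -> size m2 = fsize u ->
  admN (ancsF (t :: u)) (m1 ++ m2) = admN (ancsF [:: t]) m1 && admN (ancsF u) m2.
Proof.
move=> s1 s2.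
have sA1 : size (ancsF [:: t]) = tsize t by rewrite size_ancsF /fsize /= addn0.
have bnd : forall y x, x \in nth [::] (ancsF [:: t]) y -> x < tsize t.
  move=> y x xin; case: (ltnP y (size (ancsF [:: t]))) => yl; last first.
    by move: xin; rewrite nth_default.
  have /allP /(_ _ (mem_nth [::] yl)) /allP /(_ x xin) := ancsF_bound [:: t].
  by rewrite /fsize /= addn0.
rewrite /admN ancsF_cons size_cat s1 s2 iotaD all_cat add0n.
rewrite (_ : iota (tsize t) (fsize u) = map (addn (tsize t)) (iota 0 (fsize u))); last by rewrite -iotaDl addn0.
rewrite all_map.
congr andb.
  apply: eq_in_all => y; rewrite mem_iota add0n => /andP [_ yl].
  rewrite nth_cat s1 yl nth_cat sA1 yl; case: (nth false _ y) => //=.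
  apply: eq_in_all => x /bnd xl; by rewrite nth_cat s1 xl (leq_trans xl (leq_addr _ _)).
apply: eq_in_all => y; rewrite mem_iota add0n => /andP [_ yl] /=.
rewrite nth_cat s1 ltnNge leq_addr /= addKn nth_cat sA1 ltnNge leq_addr /= addKn.
rewrite (nth_map [::]); last by rewrite size_ancsF.
 case: (nth false _ y) => //=.
rewrite all_map; apply: eq_all => x /=.
by rewrite ltn_add2l nth_cat s1 (ltnNge (tsize t + x)) leq_addr /= addKn.
Qed.

Lemma all_imp_iota (m : bitseq) (b : bool) :
  all (fun y => nth false m y ==> b) (iota 0 (size m)) = b || all negb m.
Proof.
case: b; first by apply/allP => y _; rewrite implybT.
apply/allP/all_nthP => /=.
  move=> H i il; have := H i; rewrite mem_iota add0n il implybF; exact.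
by move=> H y; rewrite mem_iota add0n => /andP [_ yl]; rewrite implybF; exact: H.
Qed.

Lemma admN_Node cs b m : size m = fsize cs ->
  admN (ancsF [:: Node cs]) (b :: m) = admN (ancsF cs) m && (b || all negb m).
Proof.
move=> sm; rewrite /admN ancsF_Node /= implybT /=.
rewrite (_ : iota 1 (size m) = map (addn 1) (iota 0 (size m))); last by rewrite -iotaDl.
rewrite all_map -all_imp_iota -all_predI; apply: eq_in_all => y; rewrite mem_iota add0n => /andP [_ yl] /=.
rewrite (nth_map [::]); last by rewrite size_ancsF -sm.
rewrite all_cat all_map /= andbT.
by case: (nth false m y) => //=; case: b; rewrite ?andbT ?andbF.
Qed.

End File5.

Section File6.
Import GRing.Theory.
Local Open Scope ring_scope.

Lemma allm_add (R : nmodType) k l (H : bitseq -> R) :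
  \sum_(m <- allm (k + l)) H m = \sum_(m1 <- allm k) \sum_(m2 <- allm l) H (m1 ++ m2).
Proof.
elim: k H => [|k IH] H; first by rewrite add0n big_seq1.
by rewrite addSn /= !big_cat !big_map !IH.
Qed.

Lemma sum_allm_single (R : nmodType) n x (P : pred bitseq) (H : bitseq -> R) :
  x \in allm n -> (forall m, size m = n -> P m = (m == x)) ->
  \sum_(m <- allm n | P m) H m = H x.
Proof.
move=> xin HP; rewrite big_seq_cond (eq_bigl (pred1 x)).
  by rewrite -big_filter filter_pred1_uniq ?uniq_allm // big_seq1.
move=> m /=; case: (boolP (m \in allm n)) => /= min.
  by rewrite HP //; apply/eqP; rewrite -mem_allm.
by apply/esym/negbTE; apply: contraNneq min => ->.
Qed.

Lemma restr_cons t u m1 m2 : size m1 = tsize t -> size m2 = fsize u ->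
  (restrF (t :: u) (m1 ++ m2)).1 = (restrF [:: t] m1).1 ++ (restrF u m2).1.
Proof.
move=> s1 s2; rewrite restrF1 /= ((proj1 ((proj1 restr_props) t)) m1 m2 s1).
by case: (restrF u m2).
Qed.

Lemma restr_Node cs b m :
  (restrF [:: Node cs] (b :: m)).1 = if b then [:: Node (restrF cs m).1] else (restrF cs m).1.
Proof. by rewrite restrF1 restrT_Node /=; case: (restrF cs m); case: b. Qed.

Lemma CS_cons (R : nmodType) t u (G : forest -> forest -> R) :
  CS (t :: u) G = \sum_(m1 <- allm (tsize t) | admN (ancsF [:: t]) m1)
     \sum_(m2 <- allm (fsize u) | admN (ancsF u) m2)
       G ((restrF [:: t] (map negb m1)).1 ++ (restrF u (map negb m2)).1)
         ((restrF [:: t] m1).1 ++ (restrF u m2).1).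
Proof.
rewrite /CS fsize_cons big_mkcond allm_add [RHS]big_mkcond.
apply: eq_big_seq => m1; rewrite mem_allm => /eqP s1.
case: ifP => a1.
  rewrite [RHS]big_mkcond; apply: eq_big_seq => m2; rewrite mem_allm => /eqP s2.
  by rewrite admN_cons // a1 /= map_cat !restr_cons ?size_map.
by apply: big1_seq => m2; rewrite mem_allm => /andP [_ /eqP s2]; rewrite admN_cons // a1.
Qed.

Lemma CS_Node (R : nmodType) cs (G : forest -> forest -> R) :
  CS [:: Node cs] G = G [:: Node cs] [::] + CS cs (fun v w => G v [:: Node w]).
Proof.
rewrite /CS (_ : fsize [:: Node cs] = (fsize cs).+1); last by rewrite /fsize /= addn0.
rewrite [allm _.+1]/= big_cat !big_map [LHS]addrC; congr (_ + _).
  rewrite [LHS](@sum_allm_single _ _ (nseq (fsize cs) false)).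
  - rewrite (_ : map negb (false :: nseq (fsize cs) false) = true :: nseq (fsize cs) true); last by rewrite /= map_nseq.
    rewrite !restr_Node /=.
    by rewrite (proj2 (proj2 (proj2 ((proj2 restr_props) cs)))) (proj1 (proj2 (proj2 ((proj2 restr_props) cs)))).
  - by rewrite mem_allm size_nseq.
  move=> m sm; rewrite admN_Node //=; apply/andP/eqP.
    move=> [_ h]; have /all_pred1P -> : all (pred1 false) m by apply: sub_all h => -[].
    by rewrite sm.
  move=> ->; split; last by rewrite all_nseq orbT.
  apply/allP => y _; rewrite nth_nseq; by case: ifP.
rewrite big_seq_cond [RHS]big_seq_cond; apply: eq_big => m.
  case: (boolP (m \in allm _)) => //=; rewrite mem_allm => /eqP sm.
  by rewrite admN_Node // /= andbT.
move=> _; rewrite (_ : map negb (true :: m) = false :: map negb m) //.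
by rewrite !restr_Node.
Qed.

End File6.

Section File7.
Import GRing.Theory.
Local Open Scope ring_scope.

Section Field.
Variable F : fieldType.

Definition mult (f : forest -> F) := f [::] = 1 /\ forall t u, f (t :: u) = f [:: t] * f u.

Lemma mult_cat (f : forest -> F) u v : mult f -> f (u ++ v) = f u * f v.
Proof.
move=> [f0 fc]; elim: u => [|t u IH] /=; first by rewrite f0 mul1r.
by rewrite fc IH mulrA -fc.
Qed.

Lemma CS_nil (R : nmodType) (G : forest -> forest -> R) : CS [::] G = G [::] [::].
Proof. by rewrite /CS /= big_cons big_nil /= addr0. Qed.

Lemma conv_mult (f h : forest -> F) : mult f -> mult h -> mult (conv f h).
Proof.
move=> mf mh; split.
  by rewrite conv_CS CS_nil (proj1 mf) (proj1 mh) mulr1.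
move=> t u; rewrite !conv_CS !CS_cons mulr_suml; apply: eq_bigr => m1 _.
rewrite mulr_sumr /= big_cons big_nil /= addr0 !cats0; apply: eq_bigr => m2 _.
by rewrite !(mult_cat _ _ mf) !(mult_cat _ _ mh) mulrACA.
Qed.

Lemma mult_eps : mult (epsilon F).
Proof. by split=> // t u; rewrite /= mul0r. Qed.

Lemma mult_delta : mult (delta F).
Proof. by split; rewrite /delta ?big_nil // => t u; rewrite !big_cons big_nil mulr1. Qed.

Lemma conv_ext (f h1 h2 : forest -> F) u : (forall w, h1 w = h2 w) -> conv f h1 u = conv f h2 u.
Proof. by move=> e; apply: eq_bigr => W _; rewrite e. Qed.

Lemma conv_addl (f1 f2 h : forest -> F) u : conv (fun v => f1 v + f2 v) h u = conv f1 h u + conv f2 h u.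
Proof. by rewrite /conv -big_split; apply: eq_bigr => W _; rewrite mulrDl. Qed.

Lemma conv_sumr (f : forest -> F) (I : Type) (r : seq I) (c : I -> F) (G : I -> forest -> F) u :
  conv f (fun w => \sum_(i <- r) c i * G i w) u = \sum_(i <- r) c i * conv f (G i) u.
Proof.
rewrite /conv; under eq_bigr do rewrite mulr_sumr.
rewrite exchange_big; apply: eq_bigr => i _; rewrite mulr_sumr.
by apply: eq_bigr => W _; rewrite mulrCA.
Qed.

Lemma fsize_restr u m : size m = fsize u -> fsize (restrF u m).1 = count id m.
Proof. exact: (proj1 (proj2 ((proj2 restr_props) u))). Qed.

Lemma conv_eps (h : forest -> F) u : conv (epsilon F) h u = h u.
Proof.
rewrite conv_CS /CS.
have e : forall m, m \in allm (fsize u) ->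
    epsilon F (restrF u (map negb m)).1 * h (restrF u m).1 =
    if m == nseq (fsize u) true then h u else 0.
  move=> m; rewrite mem_allm => /eqP sm; case: eqP => [->|ne].
    by rewrite map_nseq /= (proj2 (proj2 (proj2 ((proj2 restr_props) u)))) /= mul1r (proj1 (proj2 (proj2 ((proj2 restr_props) u)))).
  case e: (restrF u (map negb m)).1 => [|t v]; last by rewrite /= mul0r.
  have := fsize_restr (u := u) (m := map negb m); rewrite size_map e => /(_ sm) /esym.
  rewrite count_map => /eqP; rewrite -leqn0 leqNgt -has_count has_predC => /negbNE.
  move=> h1; have /all_pred1P : all (pred1 true) m by apply: sub_all h1 => -[].
  by rewrite sm.
rewrite big_seq_cond (eq_bigr _ (fun m => fun H => e m (proj1 (andP H)))) -big_seq_cond.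
rewrite -big_mkcondr (@sum_allm_single _ _ (nseq (fsize u) true)) ?mem_allm ?size_nseq //.
move=> m sm; case: eqP => [->|]; rewrite ?andbF // andbT.
apply/allP => y _; apply/implyP => _; apply/allP => x _; apply/implyP => xl.
by move: xl; rewrite size_nseq nth_nseq => ->.
Qed.

Definition gg (v : forest) : F := delta F v - epsilon F v.

Lemma gg_vanish n u : (fsize u < n)%N -> convpow gg n u = 0.
Proof.
elim: n u => [|n IH] u //= un.
rewrite conv_CS /CS big_seq_cond; apply: big1 => m /andP [min _].
move: min; rewrite mem_allm => /eqP sm.
case e: (restrF u (map negb m)).1 => [|t v].
  by rewrite /gg /= /delta big_nil subrr mul0r.
rewrite IH ?mulr0 //.
have := fsize_restr (u := u) (m := map negb m); rewrite size_map e => /(_ sm).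
rewrite count_map fsize_cons => h1.
rewrite fsize_restr // -ltnS; apply: leq_trans un; rewrite ltnS -sm -(count_predC id m).
rewrite -{1}(addn0 (count id m)) ltn_add2l (_ : count (predC id) m = tsize t + fsize v); last by apply/esym; exact: h1.
by case: t {e h1}.
Qed.

End Field.

End File7.

Section File8.
Import GRing.Theory.
Local Open Scope ring_scope.

Section Field.
Variable F : fieldType.

Definition Phi (m : nat) : forest -> F := convpow (delta F) m.

Lemma Phi_mult m : mult (Phi m).
Proof.
elim: m => [|m IH]; first exact: mult_eps.
exact: conv_mult (mult_delta F) IH.
Qed.

Lemma Phi_Node m cs : Phi m [:: Node cs] = \sum_(j < m) Phi j cs.
Proof.
elim: m cs => [|m IH] cs; first by rewrite big_ord0.
rewrite (_ : Phi m.+1 [:: Node cs] = conv (delta F) (Phi m) [:: Node cs]) // conv_CS CS_Node (proj1 (Phi_mult m)) mulr1 big_ord_recl.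
congr (_ + _); first by rewrite /delta big_seq1; case: cs.
rewrite /CS; under eq_bigr do rewrite IH mulr_sumr.
rewrite exchange_big; apply: eq_bigr => j _ /=.
by rewrite (_ : Phi (bump 0 j) cs = conv (delta F) (Phi j) cs) // conv_CS.
Qed.

Lemma disc_prod (A B : nat -> F) m :
  \sum_(j < m) (A j * \sum_(i < j) B i) + \sum_(j < m) (B j * \sum_(i < j) A i)
  + \sum_(j < m) (A j * B j) = (\sum_(j < m) A j) * (\sum_(j < m) B j).
Proof.
elim: m => [|m IH]; first by rewrite !big_ord0 !addr0 mulr0.
rewrite !big_ord_recr /= mulrDl !mulrDr -IH.
set x := \sum_(j < m) _; set y := \sum_(j < m) _; set z := \sum_(j < m) _.
rewrite [_ * \sum_(i < m) B i]mulrC.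
rewrite -!addrA; congr (_ + _); rewrite addrCA; congr (_ + _).
rewrite [B m * _]mulrC addrCA [in RHS]addrCA; congr (_ + _); exact: addrCA.
Qed.

Lemma Phi_bowtie m a b :
  Phi m [:: circ a b] + Phi m [:: circ b a] + Phi m [:: times a b] =
  Phi m [:: a] * Phi m [:: b].
Proof.
case: a => fa; case: b => fb /=; rewrite !Phi_Node -(disc_prod (fun j => Phi j fa) (fun j => Phi j fb)).
have mc : forall j u v, Phi j (u ++ v) = Phi j u * Phi j v by move=> j u v; exact: mult_cat (Phi_mult j).
congr (_ + _ + _); apply: eq_bigr => j _; rewrite ?(mc j) -?cats1 ?(mc j) ?Phi_Node //.
Qed.

Lemma Phi_binom m u :
  Phi m u = \sum_(n < m.+1) 'C(m, n)%:R * convpow (gg F) n u.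
Proof.
elim: m u => [|m IH] u; first by rewrite big_ord1 mul1r.
rewrite (_ : Phi m.+1 u = conv (delta F) (Phi m) u) // (conv_ext _ _ (fun w => IH w)).
have -> : conv (delta F) (fun w => \sum_(n < m.+1) 'C(m, n)%:R * convpow (gg F) n w) u =
    conv (fun v => epsilon F v + gg F v) (fun w => \sum_(n < m.+1) 'C(m, n)%:R * convpow (gg F) n w) u.
  by apply: eq_bigr => W _; rewrite /gg addrC subrK.
rewrite conv_addl conv_eps conv_sumr.
rewrite [in RHS]big_ord_recl [in RHS](eq_bigr (fun i : 'I_m.+1 => ('C(m, i.+1)%:R + 'C(m, i)%:R) * convpow (gg F) i.+1 u)); last first.
  by move=> i _; rewrite /= binS natrD.
under [in RHS]eq_bigr do rewrite mulrDl.
rewrite big_split /= addrA; congr (_ + _).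
rewrite [LHS]big_ord_recl [in RHS]big_ord_recr /= (bin_small (ltnSn m)) mulr0n mul0r addr0 !bin0.
by congr (_ + _); apply: eq_bigr.
Qed.

End Field.

End File8.

Section File9.
Import GRing.Theory.
Local Open Scope ring_scope.

Section Poly.
Variable F : fieldType.

Lemma natS_neq0 (hc : [pchar F] =i pred0) n : (n.+1)%:R != 0 :> F.
Proof. by rewrite ((pcharf0P F).1 hc). Qed.

Lemma natr_inj (hc : [pchar F] =i pred0) i j : i%:R = j%:R :> F -> i = j.
Proof.
wlog ij : i j / (i <= j)%N.
  move=> H e; case: (leqP i j) => h; first exact: H.
  by apply/esym/H; [exact: ltnW | rewrite e].
move=> e; have : (j - i)%:R == 0 :> F by rewrite natrB // e subrr.
rewrite ((pcharf0P F).1 hc) subn_eq0 => ji; apply/eqP; by rewrite eqn_leq ij.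
Qed.

Fixpoint Bp (n : nat) : {poly F} :=
  if n is k.+1 then Bp k * (('X - (k%:R)%:P) * ((k.+1%:R)^-1)%:P) else 1.

Lemma Bp_horner (hc : [pchar F] =i pred0) n m : (Bp n).[m%:R] = 'C(m, n)%:R.
Proof.
elim: n => [|n IH] /=; first by rewrite hornerC bin0.
rewrite hornerM IH hornerM hornerXsubC hornerC.
case: (leqP n m) => nm.
  rewrite -natrB // mulrA -natrM mulnC -mul_bin_left natrM mulrC mulrA mulVf ?mul1r //.
  exact: natS_neq0.
by rewrite bin_small // (bin_small (ltnW _)) // !mul0r.
Qed.

Lemma Bp_deriv0 (hc : [pchar F] =i pred0) n :
  (Bp n)^`().[0] = if n is 0 then 0 else (-1) ^+ n.+1 / n%:R.
Proof.
elim: n => [|n IH]; first by rewrite /= derivC horner0.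
rewrite /= derivM !derivM derivXsubC derivC mulr0 addr0 mul1r hornerD !hornerM IH.
rewrite hornerXsubC !hornerC.
have -> : (Bp n).[0] = (n == 0)%:R.
  by have := Bp_horner hc n 0; rewrite bin0n => <-.
case: n {IH} => [|k] /=; first by rewrite mul0r add0r expr2 mulN1r opprK.
rewrite mul0r addr0 sub0r mulNr mulrN mulrA divfK ?natS_neq0 //.
by rewrite [in RHS]exprS mulN1r mulNr.
Qed.

End Poly.

End File9.

Section File10.
Import GRing.Theory.
Local Open Scope ring_scope.

Section Final.
Variable F : fieldType.

Definition Pf (u : forest) : {poly F} :=
  \sum_(n < (fsize u).+1) convpow (gg F) n u *: Bp F n.

Lemma sum_widen (f : nat -> F) k K : (k <= K)%N ->
  (forall i, (k <= i)%N -> f i = 0) -> \sum_(i < K) f i = \sum_(i < k) f i.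
Proof.
move=> kK H; rewrite [RHS](big_ord_widen K f kK) [RHS]big_mkcond.
by apply: eq_bigr => i _; case: ifP => // /negbT; rewrite -leqNgt => /H.
Qed.

Lemma Pf_horner (hc : [pchar F] =i pred0) m u : (Pf u).[m%:R] = Phi F m u.
Proof.
rewrite /Pf horner_sum Phi_binom.
under eq_bigr do rewrite hornerZ Bp_horner // mulrC.
set f := fun n => 'C(m, n)%:R * convpow (gg F) n u.
have e1 := @sum_widen f _ ((fsize u).+1 + m.+1) (leq_addr _ _).
have e2 := @sum_widen f _ ((fsize u).+1 + m.+1) (leq_addl _ _).
rewrite -e1 ?e2 //.
  by move=> i mi; rewrite /f bin_small // mul0r.
by move=> i ui; rewrite /f gg_vanish // mulr0.
Qed.

Lemma poly_eq0 (hc : [pchar F] =i pred0) (p : {poly F}) : (forall m, p.[m%:R] = 0) -> p = 0.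
Proof.
move=> H; apply/eqP; apply: contraT => pn0.
have := max_poly_roots pn0 (rs := [seq i%:R | i <- iota 0 (size p)]).
rewrite size_map size_iota ltnn; apply.
  by apply/allP => x /mapP [i _ ->]; rewrite rootE H.
rewrite map_inj_uniq ?iota_uniq //; exact: natr_inj.
Qed.

Lemma omegaE (hc : [pchar F] =i pred0) u : omega F u = (Pf u)^`().[0].
Proof.
rewrite /Pf raddf_sum horner_sum.
under [RHS]eq_bigr => i _ do rewrite (_ : poly_deriv__canonical__Algebra_Additive F _ = (convpow (gg F) i u *: Bp F i)^`()) // derivZ hornerZ Bp_deriv0 //.
rewrite big_ord_recl /= mulr0 add0r /omega big_add1 /= big_mkord.
by apply: eq_bigr => i _; rewrite mulrC.
Qed.

End Final.


End File10.

Import GRing.Theory.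
Local Open Scope ring_scope.

Theorem mainTheorem18 (F : fieldType) (charF0 : [pchar F] =i pred0)
  (a b : tree) :
  omega_lin F (bowtie a b) = 0.
Proof.
rewrite /omega_lin /bowtie !big_cons big_nil addr0 !omegaE // addrA.
have e : Pf F [:: circ a b] + Pf F [:: circ b a] + Pf F [:: times a b] = Pf F [:: a] * Pf F [:: b].
  apply: subr0_eq; apply: (poly_eq0 charF0) => m.
  by rewrite hornerD hornerN hornerM !hornerD !Pf_horner // Phi_bowtie subrr.
rewrite -!hornerD -!derivD e derivM hornerD !hornerM.
have z : forall t, (Pf F [:: t]).[0] = 0.
  move=> t; have := Pf_horner charF0 0 [:: t]; rewrite /= => ->.
  by [].
by rewrite !z mulr0 mul0r addr0.
Qed.
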